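(* Let $\mathbb{F}$ be a field, $F\in M$ a non-zero inverse form, $(f,g)$ a viable ordered pair for $\mathcal{I}_F$, and $\Theta=\{\theta\in\mathcal{I}_F\cap\mathcal{L}: |\theta| \text{ is minimal}\}$. Then $\Theta=\{f\}$ if $|g|>|f|$, and otherwise $$\Theta=\{f\}\cup\{f+\psi g:\ \psi\in R \text{ a form with } |\psi|=|f|-|g|\}.$$
   Context: $R=\mathbb{F}[x,z]$, $M=\mathbb{F}[x^{-1},z^{-1}]$ with $R$-module structure $x^pz^q\circ x^{-u}z^{-v}=x^{p-u}z^{q-v}$ if $p\le u,q\le v$ and $0$ otherwise, extended bilinearly. An inverse form is a homogeneous element of $M$; $|\cdot|$ is total degree. $\mathcal{I}_F=\{\varphi\in R:\varphi\circ F=0\}$. $\mathcal{L}$ is the set of non-zero forms $\varphi\in R$ whose coefficient of $x^{|\varphi|}$ equals $1$. A viable ordered pair (VOP) for $\mathcal{I}_F$ is a pair $(f,g)$ of non-zero monic forms with $f\in\mathcal{L}$, $z\mid g$, $\mathcal{I}_F=\langle f,g\rangle$ and $|f|+|g|=2-|F|$. *)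

(* Defs.v *)
From HB Require Import structures.
From mathcomp Require Import all_boot all_order all_algebra.
From mathcomp Require Import mpoly.
Set Implicit Arguments. Unset Strict Implicit. Unset Printing Implicit Defensive.
Import Order.TTheory GRing.Theory.
Local Open Scope ring_scope.

(* R = K[x,z] is {mpoly K[2]}, variable 0 is x and variable 1 is z.
   M = K[x^-1,z^-1] is ALSO represented by {mpoly K[2]}: the monomial
   with exponent vector (u,v) encodes the inverse monomial x^-u z^-v. *)

Definition mon2 (a b : nat) : 'X_{1..2} :=
  [multinom (if (i : nat) == 0%N then a else b) | i < 2].

(* the R-module action  phi o F, extended bilinearly from
   x^p z^q o x^-u z^-v = x^(p-u) z^(q-v) if p<=u, q<=v, and 0 otherwise *)
Definition contract (K : fieldType) (phi F : {mpoly K[2]}) : {mpoly K[2]} :=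
  \sum_(m <- msupp phi) \sum_(u <- msupp F)
     (phi@_m * F@_u) *: (if (m <= u)%MM then 'X_[(u - m)%MM] else 0).

Definition is_form (K : fieldType) (p : {mpoly K[2]}) : Prop :=
  exists d : nat, p \is d.-homog.

(* total degree of a polynomial (for R); for an inverse form F the paper's
   |F| is the NEGATIVE of this number *)
Definition deg (K : fieldType) (p : {mpoly K[2]}) : nat := (msize p).-1.

Definition annih (K : fieldType) (F phi : {mpoly K[2]}) : Prop :=
  contract phi F = 0.

Definition inL (K : fieldType) (phi : {mpoly K[2]}) : Prop :=
  [/\ phi != 0, is_form phi & phi@_(mon2 (deg phi) 0) = 1].

Definition monic_form (K : fieldType) (p : {mpoly K[2]}) : Prop :=
  is_form p /\
  exists i : nat, [/\ (i <= deg p)%N, p@_(mon2 i (deg p - i)) = 1 &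
    forall j : nat, (i < j)%N -> p@_(mon2 j (deg p - j)) = 0].

(* viable ordered pair (f,g) for I_F;  |f| + |g| = 2 - |F| becomes
   deg f + deg g = 2 + deg F  since |F| = - deg F *)
Definition VOP (K : fieldType) (F f g : {mpoly K[2]}) : Prop :=
  [/\ f != 0 /\ g != 0, monic_form f /\ monic_form g,
      inL f /\ (exists h : {mpoly K[2]}, g = 'X_1 * h),
      (forall phi : {mpoly K[2]},
          annih F phi <-> exists a b : {mpoly K[2]}, phi = a * f + b * g)
    & (deg f + deg g = 2 + deg F)%N].

Definition inTheta (K : fieldType) (F theta : {mpoly K[2]}) : Prop :=
  [/\ annih F theta, inL theta &
      forall theta' : {mpoly K[2]}, annih F theta' -> inL theta' ->
        (deg theta <= deg theta')%N].

(* Main.v *)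
Require Import Defs.
From HB Require Import structures.
From mathcomp Require Import all_boot all_order all_algebra.
From mathcomp Require Import mpoly.
Set Implicit Arguments. Unset Strict Implicit. Unset Printing Implicit Defensive.
Import Order.TTheory GRing.Theory.
Local Open Scope ring_scope.

Section H.
Variable K : fieldType.
Implicit Types p q a f g : {mpoly K[2]}.

Lemma coefX1 p t : ('X_1 * p)@_(mon2 t 0) = 0.
Proof.
rewrite mcoeffM big1 // => k /eqP E.
rewrite mcoeffX.
case: eqP => [E1|]; last by rewrite mul0r.
have := congr1 (fun m : 'X_{1..2} => m (1 : 'I_2)) E.
rewrite mnmDE -E1 /= mnm1E /mon2 mnmE /=.
by [].
Qed.

Lemma homog0C p : p \is 0.-homog -> p = (p@_0)%:MP.
Proof.
move=> hp; apply/mpolyP => m; rewrite mcoeffC.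
case: (eqVneq m 0%MM) => [->|nz]; first by rewrite ?eqxx mulr1.
rewrite mulr0; apply: (dhomog_nemf_coeff hp).
by rewrite mdeg_eq0.
Qed.

Lemma deg_homog p d : p != 0 -> p \is d.-homog -> deg p = d.
Proof.
move=> nz hp; have := dhomog_msize hp.
by move=> h; rewrite /deg; apply: (dhomog_uniq nz h hp).
Qed.

Lemma form_homog p : is_form p -> p \is (deg p).-homog.
Proof. by case=> d /dhomog_msize. Qed.

Lemma pihomogM a f d e : f \is e.-homog ->
  pihomog mdeg d (a * f) = if (e <= d)%N then pihomog mdeg (d - e) a * f else 0.
Proof.
move=> hf.
rewrite [in LHS](@pihomog_partitionE _ _ mdeg (msize a + d).+1 a); last first.
  by rewrite (leq_trans (leq_addr d _)) ?leqnSn.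
rewrite mulr_suml linear_sum /=.
rewrite (eq_bigr (fun i : 'I_(msize a + d).+1 =>
   if (i + e)%N == d then pihomog mdeg i a * f else 0)); last first.
  move=> i _; have hi := dhomogM (pihomogP mdeg i a) hf.
  case: eqP => [E|/eqP ne]; first by apply: pihomog_dE; move: hi; rewrite E.
  exact: pihomog_ne0 ne hi.
case: leqP => [le|lt].
  have lt' : (d - e < (msize a + d).+1)%N.
    by rewrite ltnS (leq_trans (leq_subr _ _)) // leq_addl.
  rewrite (bigD1 (Ordinal lt')) //= subnK // eqxx big1 ?addr0 //.
  move=> i ne; case: eqP => // E; case/eqP: ne; apply: val_inj => /=.
  by apply/eqP; rewrite -(eqn_add2r e) subnK // E.
rewrite big1 // => i _; case: eqP => // E.
by move: lt; rewrite ltnNge; case/negP; rewrite -E leq_addl.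
Qed.

Lemma coefXg g h p t : g = 'X_1 * h -> (p * g)@_(mon2 t 0) = 0.
Proof. by move=> ->; rewrite mulrCA coefX1. Qed.

Lemma decomp f g th a b : is_form f -> is_form g ->
  th \is (deg th).-homog -> th = a * f + b * g ->
  th = (if (deg f <= deg th)%N then pihomog mdeg (deg th - deg f) a * f else 0)
     + (if (deg g <= deg th)%N then pihomog mdeg (deg th - deg g) b * g else 0).
Proof.
move=> ff fg ht E.
rewrite -(pihomogM _ _ (form_homog ff)) -(pihomogM _ _ (form_homog fg)).
by rewrite -linearD -E; apply/esym/pihomog_dE.
Qed.

Lemma lowbd F f g : VOP F f g -> forall th, annih F th -> inL th ->
  (deg f <= deg th)%N.
Proof.
case=> [[nzf nzg] [mf mg] [Lf [h gh]] Iff degs] th ath [nzt ft].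
rewrite leqNgt; set t := deg th => ct; apply/negP => lt.
have [a [b E]] := (Iff th).1 ath.
case: Lf => _ ff _.
have E2 := decomp ff mg.1 (form_homog ft) E.
rewrite -/t leqNgt lt /= add0r in E2.
move: ct; rewrite E2; case: ifP => _; first by rewrite (coefXg _ _ gh) => /eqP; rewrite eq_sym oner_eq0.
by rewrite mcoeff0 => /eqP; rewrite eq_sym oner_eq0.
Qed.
End H.

Unset Implicit Arguments.
Theorem corollary3 (K : fieldType) (F f g : {mpoly K[2]}) :
  F != 0 -> is_form F -> VOP F f g ->
  forall theta : {mpoly K[2]},
    inTheta F theta <->
    (if (deg f < deg g)%N then theta = f
     else theta = f \/
          exists psi : {mpoly K[2]},
            psi \is (deg f - deg g)%N.-homog /\ theta = f + psi * g).
Proof.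
move=> _ _ V th; have LB := lowbd V.
case: V => [[nzf nzg] [mf mg] [Lf [h gh]] Iff degs].
have Lf' := Lf; case: Lf' => _ ff cf.
have fT : inTheta F f.
  split; [|exact: Lf|by move=> t' at' Lt'; exact: LB].
  by apply/(Iff f).2; exists 1, 0; rewrite mul1r mul0r addr0.
split.
- case=> ath Lth minth.
  have eqd : deg th = deg f.
    by apply/eqP; rewrite eqn_leq (minth f) ?LB //; case: fT.
  have [a [b E]] := (Iff th).1 ath.
  case: (Lth) => nzt ft ct.
  have E2 := decomp ff mg.1 (form_homog ft) E.
  rewrite eqd leqnn subnn in E2 ct.
  rewrite (homog0C (pihomogP mdeg 0 a)) mul_mpolyC in E2.
  have c1 : (pihomog mdeg 0 a)@_0 = 1.
    move: ct; rewrite {1}E2 mcoeffD mcoeffZ cf mulr1.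
    case: ifP => _; last by rewrite mcoeff0 addr0.
    by rewrite (coefXg _ _ gh) addr0.
  rewrite c1 scale1r in E2.
  case: ifP => lt.
    by rewrite E2 leqNgt lt addr0.
  right; exists (pihomog mdeg (deg f - deg g) b); split; first exact: pihomogP.
  by rewrite E2 leqNgt lt.
- have key : forall psi, psi \is (deg f - deg g)%N.-homog -> ~~ (deg f < deg g)%N ->
      inTheta F (f + psi * g).
    move=> psi hpsi nlt.
    have hth : f + psi * g \is (deg f).-homog.
      apply: rpredD; first exact: form_homog.
      have le : (deg g <= deg f)%N by rewrite leqNgt.
      rewrite -(subnK le).
      exact: dhomogM hpsi (form_homog mg.1).
    have c : (f + psi * g)@_(mon2 (deg f) 0) = 1.
      by rewrite mcoeffD cf (coefXg _ _ gh) addr0.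
    have nz : f + psi * g != 0.
      by apply/eqP => E; move: c; rewrite E mcoeff0 => /eqP; rewrite eq_sym oner_eq0.
    have dth := deg_homog nz hth.
    have ath : annih F (f + psi * g).
      by apply/(Iff _).2; exists 1, psi; rewrite mul1r.
    split => //.
      by split => //; [exists (deg f) | rewrite dth].
    by move=> t' at' Lt'; rewrite dth; exact: LB.
  case: ifP => lt; first by move=> ->.
  case=> [->|[psi [hpsi ->]]] //.
  by apply: key => //; rewrite lt.
Qed.
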